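(* Let $n > 1$. The class of $\mathrm{FP}_n$-flat left $R$-modules is closed under extensions, under direct limits, under direct products, and under pure submodules and pure quotients (i.e. if $0 \to N \to M \to M/N \to 0$ is a pure exact sequence with $M$ $\mathrm{FP}_n$-flat, then $N$ and $M/N$ are $\mathrm{FP}_n$-flat).
   Context: $R$ is an associative ring with unit. For $n \ge 0$, a (left or right) $R$-module is finitely $n$-presented if there is an exact sequence $F_n \to \cdots \to F_0 \to M \to 0$ with every $F_i$ finitely generated free; $\mathrm{FP}_n$ is the class of such modules. A left $R$-module $M$ is $\mathrm{FP}_n$-flat if $\mathrm{Tor}_1^R(F,M)=0$ for every right $R$-module $F\in\mathrm{FP}_n$. *)

(* Defs.v *)
From HB Require Import structures.
From mathcomp Require Import all_boot all_order all_algebra.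
Set Implicit Arguments. Unset Strict Implicit. Unset Printing Implicit Defensive.
Import GRing.Theory.
Local Open Scope ring_scope.

(* Right R-modules are left modules over the converse ring R^c:
   the right action  x . r  is written  (r : R^c) *: x. *)
Notation rmodType R := (lmodType (GRing.converse R)).

Section Defs.
Variable R : pzRingType.

(* A right module F in FP_n is given (up to isomorphism, F = coker d 0) by an
   exact complex of finitely generated free right modules
     R^(k n) --d(n-1)--> ... --d 1--> R^(k 1) --d 0--> R^(k 0)  (--> F --> 0),
   where R^(k i) are column vectors and d i : R^(k i.+1) -> R^(k i) is left
   multiplication by a (k i) x (k i.+1) matrix (a right-linear map).                       *)
Definition fp_resolution (n : nat) (k : nat -> nat)
    (d : forall i, 'M[R]_(k i, k i.+1)) : Prop :=
  forall i, (i.+1 < n)%N ->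
    d i *m d i.+1 = 0 /\
    forall v : 'cV[R]_(k i.+1), d i *m v = 0 ->
      exists w : 'cV[R]_(k i.+2), d i.+1 *m w = v.

(* Tor_1^R(F, M) = 0, computed from the (start of the) free resolution above:
   tensoring with M gives  M^(k 2) -> M^(k 1) -> M^(k 0), (x_l) |-> (sum_l a_jl x_l),
   and Tor_1 is its homology at M^(k 1).                                     *)
Definition Tor1_vanishes (k : nat -> nat) (d : forall i, 'M[R]_(k i, k i.+1))
    (M : lmodType R) : Prop :=
  forall x : 'I_(k 1) -> M,
    (forall j : 'I_(k 0), \sum_(l < k 1) d 0 j l *: x l = 0) ->
    exists y : 'I_(k 2) -> M,
      forall l : 'I_(k 1), x l = \sum_(m < k 2) d 1 l m *: y m.

Definition FPn_flat (n : nat) (M : lmodType R) : Prop :=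
  forall (k : nat -> nat) (d : forall i, 'M[R]_(k i, k i.+1)),
    fp_resolution n d -> Tor1_vanishes d M.

Definition short_exact (A B C : lmodType R) (f : A -> B) (g : B -> C) : Prop :=
  [/\ injective f, (forall c, exists b, g b = c) &
      (forall b, g b = 0 <-> exists a, f a = b)].

Definition balanced (F : rmodType R) (N : lmodType R) (T : zmodType)
    (b : F -> N -> T) : Prop :=
  [/\ (forall x1 x2 y, b (x1 + x2) y = b x1 y + b x2 y),
      (forall x y1 y2, b x (y1 + y2) = b x y1 + b x y2) &
      (forall x (r : R) y, b ((r : GRing.converse R) *: x) y = b x (r *: y))].

Definition is_tensor (F : rmodType R) (N : lmodType R) (T : zmodType)
    (b : F -> N -> T) : Prop :=
  balanced b /\
  forall (T' : zmodType) (b' : F -> N -> T'), balanced b' ->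
    exists u : {additive T -> T'},
      (forall x y, u (b x y) = b' x y) /\
      forall v : {additive T -> T'}, (forall x y, v (b x y) = b' x y) ->
        forall t, v t = u t.

Definition pure_map (N M : lmodType R) (f : N -> M) : Prop :=
  forall (F : rmodType R) (T1 T2 : zmodType) (b1 : F -> N -> T1) (b2 : F -> M -> T2),
    is_tensor b1 -> is_tensor b2 ->
    forall u : {additive T1 -> T2}, (forall x y, u (b1 x y) = b2 x (f y)) ->
      injective u.

Definition direct_system (I : Type) (le : I -> I -> Prop) (Mi : I -> lmodType R)
    (f : forall i j, {linear Mi i -> Mi j}) : Prop :=
  [/\ (forall i, le i i), (forall i j l, le i j -> le j l -> le i l),
      inhabited I, (forall i j, exists l, le i l /\ le j l) &
      (forall i x, f i i x = x)] /\
      (forall i j l x, le i j -> le j l -> f j l (f i j x) = f i l x).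

Definition cocone (I : Type) (le : I -> I -> Prop) (Mi : I -> lmodType R)
    (f : forall i j, {linear Mi i -> Mi j}) (N : lmodType R)
    (h : forall i, {linear Mi i -> N}) : Prop :=
  forall i j x, le i j -> h j (f i j x) = h i x.

Definition is_direct_limit (I : Type) (le : I -> I -> Prop) (Mi : I -> lmodType R)
    (f : forall i j, {linear Mi i -> Mi j}) (M : lmodType R)
    (g : forall i, {linear Mi i -> M}) : Prop :=
  cocone le f g /\
  forall (N : lmodType R) (h : forall i, {linear Mi i -> N}), cocone le f h ->
    exists u : {linear M -> N},
      (forall i x, u (g i x) = h i x) /\
      forall v : {linear M -> N}, (forall i x, v (g i x) = h i x) ->
        forall y, v y = u y.

Definition is_product (I : Type) (Mi : I -> lmodType R) (P : lmodType R)
    (p : forall i, {linear P -> Mi i}) : Prop :=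
  forall (N : lmodType R) (h : forall i, {linear N -> Mi i}),
    exists u : {linear N -> P},
      (forall i x, p i (u x) = h i x) /\
      forall v : {linear N -> P}, (forall i x, p i (v x) = h i x) ->
        forall y, v y = u y.

End Defs.

(* Main.v *)
Require Import Defs.
From HB Require Import structures.
From mathcomp Require Import all_boot all_order all_algebra.
From mathcomp Require Import boolp.
Set Warnings "-notation-overridden,-ambiguous-paths,-projection-no-head-constant,-redundant-canonical-projection".
Set Implicit Arguments. Unset Strict Implicit. Unset Printing Implicit Defensive.
Import GRing.Theory.
Local Open Scope ring_scope.

Definition mk_lin (R : pzRingType) (U V : lmodType R) (f : U -> V) (H : linear f)
  : {linear U -> V} := HB.pack f (GRing.isLinear.Build R U V *:%R f H).
Lemma mk_linE (R : pzRingType) (U V : lmodType R) (f : U -> V) (H : linear f) x :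
  mk_lin H x = f x.
Proof. by []. Qed.
Definition mk_add (U V : zmodType) (f : U -> V) (H : zmod_morphism f)
  : {additive U -> V} := HB.pack f (GRing.isZmodMorphism.Build U V f H).
Lemma mk_addE (U V : zmodType) (f : U -> V) (H : zmod_morphism f) x :
  mk_add H x = f x.
Proof. by []. Qed.

Record zsubP (V : zmodType) (K : V -> Prop) : Prop := ZsubP {
  sK0 : K 0; sKB : forall x y, K x -> K y -> K (x - y) }.

Section Quot.
Variables (V : zmodType) (K : V -> Prop) (HK : zsubP K).

Lemma sKN x : K x -> K (- x).
Proof. by move=> kx; rewrite -sub0r; apply: sKB => //; apply: (sK0 HK). Qed.
Lemma sKD x y : K x -> K y -> K (x + y).
Proof. by move=> kx ky; rewrite -[y]opprK; apply: sKB => //; apply: sKN. Qed.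
Lemma sKsym x y : K (x - y) -> K (y - x).
Proof. by move=> h; rewrite -opprB; apply: sKN. Qed.
Lemma sKtr x y z : K (x - y) -> K (y - z) -> K (x - z).
Proof. by move=> h1 h2; have := sKD h1 h2; rewrite addrA subrK. Qed.

Definition qrel (v : V) : pred V := fun w => `[< K (v - w) >].
Lemma qrel_ex v : exists w, qrel v w.
Proof. by exists v; apply/asboolP; rewrite subrr; apply: (sK0 HK). Qed.
Definition canon (v : V) : V := xchoose (qrel_ex v).
Lemma canonP v : K (v - canon v).
Proof. exact/asboolP/(xchooseP (qrel_ex v)). Qed.
Lemma canon_rel v : K (canon v - v).
Proof. exact: sKsym (canonP v). Qed.
Lemma canon_eq v w : K (v - w) -> canon v = canon w.
Proof.
move=> h; apply: eq_xchoose => u; apply/asboolP/asboolP => h2.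
  by apply: sKtr (sKsym h) h2.
by apply: sKtr h h2.
Qed.
Lemma canonK v : canon (canon v) = canon v.
Proof. by apply: canon_eq; apply: sKsym; apply: canonP. Qed.

Record qT := QT { qval : V; _ : canon qval == qval }.
HB.instance Definition _ := [isSub for qval].
HB.instance Definition _ := [Choice of qT by <:].

Definition qpi (v : V) : qT := @QT (canon v) (introT eqP (canonK v)).
Lemma qpi_val q : qpi (qval q) = q.
Proof. by case: q => v h; apply: val_inj => /=; exact: (eqP h). Qed.
Lemma qpi_eq v w : K (v - w) -> qpi v = qpi w.
Proof. by move=> h; apply: val_inj => /=; apply: canon_eq. Qed.
Lemma qpi_eqP v w : qpi v = qpi w -> K (v - w).
Proof.
move=> /(congr1 qval) /= h.
have h1 := canonP v; rewrite h in h1; exact: sKtr h1 (sKsym (canonP w)).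
Qed.
Lemma qpi_surj q : exists v, q = qpi v.
Proof. by exists (qval q); rewrite qpi_val. Qed.

Definition qadd (a b : qT) := qpi (qval a + qval b).
Definition qopp (a : qT) := qpi (- qval a).
Definition qzero := qpi 0.
Lemma qaddE v w : qadd (qpi v) (qpi w) = qpi (v + w).
Proof.
apply: qpi_eq => /=.
have -> : canon v + canon w - (v + w) = (canon v - v) + (canon w - w).
  by rewrite opprD addrACA.
by apply: sKD; apply: canon_rel.
Qed.
Lemma qoppE v : qopp (qpi v) = qpi (- v).
Proof. apply: qpi_eq => /=. have -> : forall a b : V, - a - - b = - (a - b) by move=> a b; rewrite opprD. by apply: sKN; apply: canon_rel. Qed.

Lemma qaddA : associative qadd.
Proof.
move=> a b c; case: (qpi_surj a) => x ->; case: (qpi_surj b) => y ->;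
case: (qpi_surj c) => z ->; by rewrite !qaddE addrA.
Qed.
Lemma qaddC : commutative qadd.
Proof. by move=> a b; case: (qpi_surj a) => x ->; case: (qpi_surj b) => y ->; rewrite !qaddE addrC. Qed.
Lemma qadd0 : left_id qzero qadd.
Proof. by move=> a; case: (qpi_surj a) => x ->; rewrite /qzero qaddE add0r. Qed.
Lemma qaddN : left_inverse qzero qopp qadd.
Proof. by move=> a; case: (qpi_surj a) => x ->; rewrite qoppE qaddE addNr. Qed.
HB.instance Definition _ := GRing.isZmodule.Build qT qaddA qaddC qadd0 qaddN.
Lemma qpiD v w : qpi v + qpi w = qpi (v + w). Proof. exact: qaddE. Qed.
Lemma qpiN v : - qpi v = qpi (- v). Proof. exact: qoppE. Qed.
Lemma qpiB v w : qpi v - qpi w = qpi (v - w). Proof. by rewrite qpiN qpiD. Qed.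
Lemma qpi_add : zmod_morphism qpi.
Proof. by move=> u v; rewrite qpiB. Qed.
Definition qpiA : {additive V -> qT} := mk_add qpi_add.
Lemma qpi0 v : qpi v = 0 <-> K v.
Proof.
split=> [h|h]; first by have := qpi_eqP (h : qpi v = qpi 0); rewrite subr0.
by apply: (qpi_eq (w:=0)); rewrite subr0.
Qed.

Lemma qpi_sum (J : Type) (r : seq J) (F : J -> V) :
  qpi (\sum_(j <- r) F j) = \sum_(j <- r) qpi (F j).
Proof.
elim: r => [|j r IH]; first by rewrite !big_nil; apply/qpi0; apply: (sK0 HK).
by rewrite !big_cons -qpiD IH.
Qed.

Variables (W : zmodType) (phi : {additive V -> W}) (Hphi : forall v, K v -> phi v = 0).
Definition qind (q : qT) : W := phi (qval q).
Lemma qindE v : qind (qpi v) = phi v.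
Proof. rewrite /qind /=; apply/eqP; rewrite -subr_eq0 -raddfB Hphi //; apply: canon_rel. Qed.
Lemma qind_add : zmod_morphism qind.
Proof.
move=> a b; case: (qpi_surj a) => x ->; case: (qpi_surj b) => y ->.
by rewrite qpiB !qindE raddfB.
Qed.
Definition qindA : {additive qT -> W} := mk_add qind_add.
Lemma qindAE v : qindA (qpi v) = phi v. Proof. exact: qindE. Qed.
End Quot.

Section LQuot.
Variables (S : pzRingType) (V : lmodType S) (K : V -> Prop) (HK : zsubP K)
  (HZ : forall a x, K x -> K (a *: x)).
Definition lqT (_ : forall a x, K x -> K (a *: x)) := qT HK.
Local Notation lq := (lqT HZ).
HB.instance Definition _ := GRing.Zmodule.on lq.
Definition lqpi (v : V) : lq := qpi HK v.
Definition qscale (r : S) (a : lq) : lq := lqpi (r *: qval a).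
Lemma qscaleE r v : qscale r (lqpi v) = lqpi (r *: v).
Proof. by apply: qpi_eq => /=; rewrite -scalerBr; apply: HZ; apply: canon_rel. Qed.
Lemma lqpi_surj (q : lq) : exists v, q = lqpi v.
Proof. exact: qpi_surj. Qed.
Lemma lqpiD v w : lqpi v + lqpi w = lqpi (v + w). Proof. exact: qaddE. Qed.
Lemma qscaleA a b v : qscale a (qscale b v) = qscale (a * b) v.
Proof. by case: (lqpi_surj v) => x ->; rewrite !qscaleE scalerA. Qed.
Lemma qscale1 : left_id 1 qscale.
Proof. by move=> v; case: (lqpi_surj v) => x ->; rewrite !qscaleE scale1r. Qed.
Lemma qscaleDr : right_distributive qscale +%R.
Proof. by move=> a u v; case: (lqpi_surj u) => x ->; case: (lqpi_surj v) => y ->;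
  rewrite lqpiD !qscaleE lqpiD scalerDr. Qed.
Lemma qscaleDl v : {morph qscale^~ v: a b / a + b}.
Proof. by move=> a b; case: (lqpi_surj v) => x ->; rewrite !qscaleE lqpiD scalerDl. Qed.
HB.instance Definition _ := GRing.Zmodule_isLmodule.Build S lq qscaleA qscale1 qscaleDr qscaleDl.
Lemma lqpiZ r v : r *: lqpi v = lqpi (r *: v). Proof. exact: qscaleE. Qed.
Lemma lqpi_lin : linear lqpi.
Proof. by move=> a u v; rewrite -lqpiD -lqpiZ. Qed.
Definition lqpiL : {linear V -> lq} := mk_lin lqpi_lin.
Lemma lqpi_sum (J : Type) (r : seq J) (F : J -> V) :
  lqpi (\sum_(j <- r) F j) = \sum_(j <- r) lqpi (F j).
Proof. exact: qpi_sum. Qed.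
Lemma lqpi0 v : lqpi v = 0 <-> K v.
Proof. exact: qpi0. Qed.
End LQuot.

Section DProd.
Variables (S : pzRingType) (I : Type) (Mi : I -> lmodType S).
Definition dprodT := forall i, Mi i.
HB.instance Definition _ := gen_eqMixin dprodT.
HB.instance Definition _ := gen_choiceMixin dprodT.
Definition dadd (a b : dprodT) : dprodT := fun i => a i + b i.
Definition dopp (a : dprodT) : dprodT := fun i => - a i.
Definition dzero : dprodT := fun i => 0.
Definition dscale (r : S) (a : dprodT) : dprodT := fun i => r *: a i.
Lemma dext (a b : dprodT) : (forall i, a i = b i) -> a = b.
Proof. exact: functional_extensionality_dep. Qed.
Lemma daddA : associative dadd. Proof. by move=> a b c; apply: dext => i; rewrite /dadd addrA. Qed.
Lemma daddC : commutative dadd. Proof. by move=> a b; apply: dext => i; rewrite /dadd addrC. Qed.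
Lemma dadd0 : left_id dzero dadd. Proof. by move=> a; apply: dext => i; rewrite /dadd add0r. Qed.
Lemma daddN : left_inverse dzero dopp dadd. Proof. by move=> a; apply: dext => i; rewrite /dadd addNr. Qed.
HB.instance Definition _ := GRing.isZmodule.Build dprodT daddA daddC dadd0 daddN.
Lemma dscaleA a b v : dscale a (dscale b v) = dscale (a * b) v.
Proof. by apply: dext => i; rewrite /dscale scalerA. Qed.
Lemma dscale1 : left_id 1 dscale. Proof. by move=> v; apply: dext => i; rewrite /dscale scale1r. Qed.
Lemma dscaleDr : right_distributive dscale +%R.
Proof. by move=> a u v; apply: dext => i; rewrite /dscale /= /dadd scalerDr. Qed.
Lemma dscaleDl v : {morph dscale^~ v: a b / a + b}.
Proof. by move=> a b; apply: dext => i; rewrite /dscale /= /dadd scalerDl. Qed.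
HB.instance Definition _ := GRing.Zmodule_isLmodule.Build S dprodT dscaleA dscale1 dscaleDr dscaleDl.
Lemma dprod_addE (a b : dprodT) i : (a + b) i = a i + b i. Proof. by []. Qed.
Lemma dprod_oppE (a : dprodT) i : (- a) i = - a i. Proof. by []. Qed.
Lemma dprod_zeroE i : (0 : dprodT) i = 0. Proof. by []. Qed.
Lemma dprod_scaleE r (a : dprodT) i : (r *: a) i = r *: a i. Proof. by []. Qed.
Lemma dprod_sumE (J : Type) (r : seq J) (F : J -> dprodT) i :
  (\sum_(j <- r) F j) i = \sum_(j <- r) F j i.
Proof. by elim: r => [|j r IH]; rewrite ?big_nil ?big_cons // dprod_addE IH. Qed.
End DProd.

Lemma sum_mulmx (R : pzRingType) (M : lmodType R) a b c (A : 'M[R]_(a,b)) (B : 'M[R]_(b,c))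
  (y : 'I_c -> M) j :
  \sum_(l < b) A j l *: \sum_(m < c) B l m *: y m = \sum_(m < c) (A *m B) j m *: y m.
Proof.
under eq_bigr do rewrite scaler_sumr.
rewrite exchange_big; apply: eq_bigr => m _; rewrite mxE scaler_suml.
by apply: eq_bigr => l _; rewrite scalerA.
Qed.

Lemma lin_sumZ (R : pzRingType) (U V : lmodType R) (f : {linear U -> V}) b
  (r : 'I_b -> R) (x : 'I_b -> U) :
  f (\sum_(l < b) r l *: x l) = \sum_(l < b) r l *: f (x l).
Proof. by rewrite linear_sum; apply: eq_bigr => l _; rewrite linearZ_LR. Qed.

Lemma ext_flat (R : pzRingType) (n : nat) (hn : (1 < n)%N) (A B C : lmodType R)
  (f : {linear A -> B}) (g : {linear B -> C}) :
  short_exact f g -> FPn_flat n A -> FPn_flat n C -> FPn_flat n B.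
Proof.
move=> [finj gsurj gker] FA FC k d Hres x Hx.
have [Hdd _] := Hres 0%N hn.
have HCx : forall j, \sum_(l < k 1%N) d 0%N j l *: g (x l) = 0.
  by move=> j; rewrite -lin_sumZ Hx linear0.
have [z Hz] := FC k d Hres _ HCx.
have [z' Hz'] := choice (fun m => gsurj (z m)).
pose x2 l := x l - \sum_(m < k 2%N) d 1%N l m *: z' m.
have gx2 l : g (x2 l) = 0.
  rewrite linearB lin_sumZ Hz; apply/eqP; rewrite subr_eq0; apply/eqP.
  by apply: eq_bigr => m _; rewrite Hz'.
have [a Ha] := choice (fun l => (proj1 (gker (x2 l))) (gx2 l)).
have Hda : forall j, \sum_(l < k 1%N) d 0%N j l *: a l = 0.
  move=> j; apply: finj; rewrite linear0 lin_sumZ.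
  under eq_bigr do rewrite Ha.
  rewrite /x2; under eq_bigr do rewrite scalerBr.
  rewrite sumrB Hx sum_mulmx Hdd sub0r.
  rewrite (eq_bigr (fun _ => 0)) ?big1_eq ?oppr0 // => m _.
  by rewrite mxE scale0r.
have [y Hy] := FA k d Hres a Hda.
exists (fun m => z' m + f (y m)) => l.
have -> : x l = f (a l) + \sum_(m < k 2%N) d 1%N l m *: z' m.
  by rewrite Ha /x2 subrK.
rewrite Hy lin_sumZ -big_split /=; apply: eq_bigr => m _.
by rewrite scalerDr addrC.
Qed.

Section DL.
Variables (R : pzRingType) (I : Type) (le : I -> I -> Prop) (Mi : I -> lmodType R)
  (f : forall i j, {linear Mi i -> Mi j}) (M : lmodType R)
  (g : forall i, {linear Mi i -> M}).
Hypotheses (Hds : direct_system le f) (Hdl : is_direct_limit le f g).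

Lemma le_refl i : le i i. Proof. by have [[h1 h2 h3 h4 h5] h6] := Hds; apply: h1. Qed.
Lemma le_trans i j l : le i j -> le j l -> le i l. Proof. by have [[h1 h2 h3 h4 h5] h6] := Hds; apply: h2. Qed.
Lemma I_inh : inhabited I. Proof. by have [[h1 h2 h3 h4 h5] h6] := Hds. Qed.
Lemma le_dir i j : exists l, le i l /\ le j l. Proof. by have [[h1 h2 h3 h4 h5] h6] := Hds; apply: h4. Qed.
Lemma f_comp i j l x : le i j -> le j l -> f j l (f i j x) = f i l x.
Proof. by have [_ h6] := Hds; apply: h6. Qed.
Lemma g_coc i j x : le i j -> g j (f i j x) = g i x.
Proof. by case: Hdl => H _; apply: H. Qed.

Lemma bound_nat (i0 : I) (k : nat) (phi : nat -> I) :
  exists u, le i0 u /\ forall t, (t < k)%N -> le (phi t) u.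
Proof.
elim: k => [|k [u [h1 h2]]]; first by exists i0; split => //; apply: le_refl.
have [u' [h3 h4]] := le_dir u (phi k).
exists u'; split; first exact: le_trans h1 h3.
move=> t; rewrite ltnS leq_eqVlt => /orP [/eqP -> //| /h2 h].
exact: le_trans h h3.
Qed.

Lemma bound_ord (i0 : I) (k : nat) (phi : 'I_k -> I) :
  exists u, le i0 u /\ forall t, le (phi t) u.
Proof.
have [u [h1 h2]] := bound_nat i0 k (fun t => odflt i0 (omap phi (insub t))).
exists u; split => // t; have := h2 _ (ltn_ord t); by rewrite valK.
Qed.

Definition Sset (y : M) := exists i x, g i x = y.
Lemma Sset_sub : zsubP Sset.
Proof.
have [i0] := I_inh.
split; first by exists i0, 0; rewrite linear0.
move=> _ _ [i [x <-]] [j [y <-]].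
have [l [hi hj]] := le_dir i j.
by exists l, (f i l x - f j l y); rewrite linearB !g_coc.
Qed.
Lemma Sset_Z a y : Sset y -> Sset (a *: y).
Proof. by move=> [i [x <-]]; exists i, (a *: x); rewrite linearZ_LR. Qed.

Lemma zlin (U V : lmodType R) : linear (fun _ : U => (0 : V)).
Proof. by move=> a u v; rewrite scaler0 addr0. Qed.

Lemma dl_surj y : Sset y.
Proof.
have [u [_ Hu]] := (proj2 Hdl) (lqT Sset_sub Sset_Z) (fun i => mk_lin (@zlin (Mi i) (lqT Sset_sub Sset_Z))) (fun i j x _ => erefl).
have e1 := Hu (lqpiL Sset_sub Sset_Z).
have e2 := Hu (mk_lin (@zlin M (lqT Sset_sub Sset_Z))).
have : lqpi Sset_sub Sset_Z y = 0.
  rewrite [LHS](e1 _ y); first by rewrite -(e2 _ y).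
  by move=> i x; rewrite mk_linE /=; apply/lqpi0; exists i, x.
by move/lqpi0.
Qed.

Definition Ev (v : dprodT Mi) := exists l, forall j, le l j -> v j = 0.
Lemma Ev_sub : zsubP Ev.
Proof.
have [i0] := I_inh.
split; first by exists i0.
move=> v w [l1 h1] [l2 h2]; have [l [e1 e2]] := le_dir l1 l2.
exists l => j hj; rewrite dprod_addE dprod_oppE h1 ?h2 ?subr0 //.
  exact: le_trans e2 hj.
exact: le_trans e1 hj.
Qed.
Lemma Ev_Z a v : Ev v -> Ev (a *: v).
Proof. by move=> [l h]; exists l => j hj; rewrite dprod_scaleE h // scaler0. Qed.

Definition phi i (x : Mi i) : dprodT Mi :=
  fun j => if `[< le i j >] then f i j x else 0.
Lemma phi_lin i : linear (@phi i).
Proof.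
move=> a u v; apply: dext => j; rewrite /phi dprod_addE dprod_scaleE.
by case: ifP => _; rewrite ?linearP ?scaler0 ?addr0.
Qed.
Definition hQ i : {linear Mi i -> lqT Ev_sub Ev_Z} :=
  mk_lin (fun a u v => etrans (congr1 (lqpi Ev_sub Ev_Z) (@phi_lin i a u v))
                              (lqpi_lin Ev_sub Ev_Z a (phi u) (phi v))).

Lemma dl_ker i x : g i x = 0 -> exists j, le i j /\ f i j x = 0.
Proof.
move=> H.
have coc : cocone le f hQ.
  move=> i' j x' hij; rewrite !mk_linE; apply: qpi_eq; exists j => m hm.
  rewrite dprod_addE dprod_oppE /phi.
  have hm' : le i' m by exact: le_trans hij hm.
  by rewrite (asboolT hm) (asboolT hm') f_comp // subrr.
have [u [Hu _]] := (proj2 Hdl) _ hQ coc.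
have := Hu i x; rewrite H linear0 mk_linE => /esym /lqpi0 [l hl].
have [m [h1 h2]] := le_dir i l.
exists m; split => //; have := hl m h2; by rewrite /phi (asboolT h1).
Qed.

Lemma dl_flat n : (forall i, FPn_flat n (Mi i)) -> FPn_flat n M.
Proof.
move=> FM k d Hres x Hx.
have [ix Hix] := choice (fun l => (fun '(ex_intro i (ex_intro x' e)) =>
   ex_intro (fun p : {i : I & Mi i} => g (projT1 p) (projT2 p) = x l)
     (existT _ i x') e) (dl_surj (x l))).
have [i0] := I_inh.
have [i [_ hi]] := bound_ord i0 (fun l => projT1 (ix l)).
pose z l := f (projT1 (ix l)) i (projT2 (ix l)).
have gz l : g i (z l) = x l by rewrite g_coc // Hix.
pose w j := \sum_(l < k 1%N) d 0%N j l *: z l.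
have Hw j : exists j', le i j' /\ f i j' (w j) = 0.
  by apply: dl_ker; rewrite lin_sumZ -[RHS](Hx j); apply: eq_bigr => l _; rewrite gz.
have [jj Hjj] := choice Hw.
have [i' [hii' hj]] := bound_ord i jj.
have Hz' : forall j, \sum_(l < k 1%N) d 0%N j l *: f i i' (z l) = 0.
  move=> j; rewrite -lin_sumZ -/(w j).
  have [h1 h2] := Hjj j.
  by rewrite -(f_comp _ h1 (hj j)) h2 linear0.
have [y Hy] := FM i' k d Hres _ Hz'.
exists (fun m => g i' (y m)) => l.
by rewrite -gz -(g_coc _ hii') Hy lin_sumZ.
Qed.
End DL.

Lemma sm_lin (R : pzRingType) (V : lmodType R) (z : V) : linear (fun r : R^o => (r : R) *: z).
Proof. by move=> a r s; rewrite scalerDl scalerA. Qed.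
Definition sm (R : pzRingType) (V : lmodType R) (z : V) : {linear R^o -> V} := mk_lin (sm_lin z).

Lemma prod_uniq (R : pzRingType) (I : Type) (Mi : I -> lmodType R) (P : lmodType R)
  (p : forall i, {linear P -> Mi i}) : is_product p ->
  forall z1 z2, (forall i, p i z1 = p i z2) -> z1 = z2.
Proof.
move=> Hp z1 z2 H.
have [u [_ Hu]] := Hp _ (fun i => sm (p i z1)).
have e1 := Hu (sm z1); have e2 := Hu (sm z2).
rewrite -[z1]scale1r -[z2]scale1r.
have -> : 1 *: z1 = sm z1 1 by [].
have -> : 1 *: z2 = sm z2 1 by [].
rewrite e1 ?e2 //; move=> i x; by rewrite /= ?mk_linE linearZ_LR ?H.
Qed.

Lemma prod_flat (R : pzRingType) (n : nat) (I : Type) (Mi : I -> lmodType R) (P : lmodType R)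
  (p : forall i, {linear P -> Mi i}) :
  is_product p -> (forall i, FPn_flat n (Mi i)) -> FPn_flat n P.
Proof.
move=> Hp FM k d Hres x Hx.
have H : forall i, exists y : 'I_(k 2%N) -> Mi i,
    forall l, p i (x l) = \sum_(m < k 2%N) d 1%N l m *: y m.
  move=> i; apply: (FM i k d Hres) => j.
  by rewrite -lin_sumZ Hx linear0.
pose Y i := projT1 (constructive_indefinite_description (H i)).
have HY i l : p i (x l) = \sum_(m < k 2%N) d 1%N l m *: Y i m.
  exact: (projT2 (constructive_indefinite_description (H i))).
have [y Hy] := choice (fun m => let: ex_intro u (conj Hu _) :=
   Hp _ (fun i => sm (Y i m)) in ex_intro (fun z => forall i, p i z = Y i m) (u 1)
   (fun i => etrans (Hu i 1) (scale1r _))).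
exists y => l; apply: (prod_uniq Hp) => i.
by rewrite HY lin_sumZ; apply: eq_bigr => m _; rewrite Hy.
Qed.

Section Pure.
Variables (R : pzRingType) (a b : nat) (A : 'M[R]_(a, b)).

Definition V0 := 'cV[R^c]_a.
Definition K0 (c : V0) := exists r : 'I_b -> R, forall j, (c j ord0 : R) = \sum_l A j l * r l.
Lemma K0_sub : zsubP K0.
Proof.
split; first by exists (fun _ => 0) => j; rewrite mxE big1 // => l _; rewrite mulr0.
move=> c1 c2 [r1 h1] [r2 h2]; exists (fun l => r1 l - r2 l) => j.
rewrite !mxE h1 h2 -sumrB; apply: eq_bigr => l _; by rewrite mulrBr.
Qed.
Lemma scale_entry (s : R) (c : V0) j : (((s : R^c) *: c) j ord0 : R) = (c j ord0 : R) * s.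
Proof. by rewrite mxE. Qed.
Lemma K0_Z s c : K0 c -> K0 (s *: c).
Proof.
move=> [r h]; exists (fun l => r l * s) => j.
rewrite scale_entry h mulr_suml; apply: eq_bigr => l _; by rewrite mulrA.
Qed.
Definition FF := lqT K0_sub K0_Z.
Lemma FF_surj (x : FF) : exists c, x = lqpi K0_sub K0_Z c.
Proof. exact: lqpi_surj. Qed.
Definition ee (j : 'I_a) : FF := lqpi K0_sub K0_Z (delta_mx j ord0).

Lemma eE (c : V0) : \sum_j ((c j ord0 : R) : R^c) *: ee j = lqpi K0_sub K0_Z c.
Proof.
rewrite [in RHS](matrix_sum_delta c) lqpi_sum.
apply: eq_bigr => j _; rewrite big_ord1 /=.
by rewrite /ee lqpiZ.
Qed.

Section TN.
Variable (N : lmodType R).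
Definition DN := dprodT (fun _ : 'I_a => N).
Definition KN (v : DN) := exists w : 'I_b -> N, forall j, v j = \sum_l A j l *: w l.
Lemma KN_sub : zsubP KN.
Proof.
split; first by exists (fun _ => 0) => j; rewrite dprod_zeroE big1 // => l _; rewrite scaler0.
move=> v1 v2 [w1 h1] [w2 h2]; exists (fun l => w1 l - w2 l) => j.
rewrite dprod_addE dprod_oppE h1 h2 -sumrB; apply: eq_bigr => l _; by rewrite scalerBr.
Qed.
Definition TT := qT KN_sub.
Definition b0 (c : V0) (y : N) : TT := qpi KN_sub (fun j => (c j ord0 : R) *: y).
Definition b1 (x : FF) (y : N) : TT := b0 (qval x) y.

Lemma b0K c y : K0 c -> b0 c y = 0.
Proof.
move=> [r h]; apply/qpi0; exists (fun l => r l *: y) => j.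
by rewrite h scaler_suml; apply: eq_bigr => l _; rewrite scalerA.
Qed.
Lemma b0B c1 c2 y : b0 (c1 - c2) y = b0 c1 y - b0 c2 y.
Proof. by rewrite /b0 qpiB; congr qpi; apply: dext => j; rewrite !mxE dprod_addE dprod_oppE scalerBl. Qed.
Lemma b0D c1 c2 y : b0 (c1 + c2) y = b0 c1 y + b0 c2 y.
Proof. by rewrite /b0 qpiD; congr qpi; apply: dext => j; rewrite !mxE dprod_addE scalerDl. Qed.
Lemma b0Dr c y1 y2 : b0 c (y1 + y2) = b0 c y1 + b0 c y2.
Proof. by rewrite /b0 qpiD; congr qpi; apply: dext => j; rewrite dprod_addE scalerDr. Qed.
Lemma b1E c y : b1 (lqpi K0_sub K0_Z c) y = b0 c y.
Proof.
apply/eqP; rewrite -subr_eq0 -b0B; apply/eqP; apply: b0K; exact: canon_rel.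
Qed.

Lemma b1_bal : balanced b1.
Proof.
split.
- move=> x1 x2 y; case: (lqpi_surj x1) => c1 ->; case: (lqpi_surj x2) => c2 ->.
  by rewrite lqpiD !b1E b0D.
- by move=> x y1 y2; rewrite /b1 b0Dr.
- move=> x r y; case: (lqpi_surj x) => c ->; rewrite lqpiZ !b1E /b0.
  by congr qpi; apply: dext => j; rewrite scale_entry scalerA.
Qed.

Lemma bal_B1 (T' : zmodType) (b' : FF -> N -> T') : balanced b' ->
  forall x1 x2 y, b' (x1 - x2) y = b' x1 y - b' x2 y.
Proof.
move=> [h1 _ _] x1 x2 y; apply/eqP; rewrite eq_sym subr_eq -h1 subrK //.
Qed.
Lemma bal_B2 (T' : zmodType) (b' : FF -> N -> T') : balanced b' ->
  forall x y1 y2, b' x (y1 - y2) = b' x y1 - b' x y2.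
Proof.
move=> [_ h2 _] x y1 y2; apply/eqP; rewrite eq_sym subr_eq -h2 subrK //.
Qed.
Lemma bal_sum1 (T' : zmodType) (b' : FF -> N -> T') : balanced b' ->
  forall (I : Type) (r : seq I) (X : I -> FF) y,
  b' (\sum_(i <- r) X i) y = \sum_(i <- r) b' (X i) y.
Proof.
move=> hb I r X y; have b0' : b' 0 y = 0 by have := bal_B1 hb 0 0 y; rewrite !subrr.
elim: r => [|i r IH]; first by rewrite !big_nil.
by rewrite !big_cons; case: hb => h1 _ _; rewrite h1 IH.
Qed.
Lemma bal_sum2 (T' : zmodType) (b' : FF -> N -> T') : balanced b' ->
  forall (I : Type) (r : seq I) x (Y : I -> N),
  b' x (\sum_(i <- r) Y i) = \sum_(i <- r) b' x (Y i).
Proof.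
move=> hb I r x Y; have b0' : b' x 0 = 0 by have := bal_B2 hb x 0 0; rewrite !subrr.
elim: r => [|i r IH]; first by rewrite !big_nil.
by rewrite !big_cons; case: hb => _ h2 _; rewrite h2 IH.
Qed.

Lemma b1_tensor : is_tensor b1.
Proof.
split; first exact: b1_bal.
move=> T' b' hb; have [hb1 hb2 hb3] := hb.
pose u0 (v : DN) : T' := \sum_j b' (ee j) (v j).
have u0_add : zmod_morphism u0.
  by move=> v w; rewrite /u0 -sumrB; apply: eq_bigr => j _; rewrite dprod_addE dprod_oppE bal_B2.
pose u0A := mk_add u0_add.
have u0K : forall v, KN v -> u0A v = 0.
  move=> v [w hw]; rewrite mk_addE /u0.
  under eq_bigr do rewrite hw bal_sum2 //.
  rewrite exchange_big /=; apply: big1 => l _.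
  under eq_bigr do rewrite -hb3.
  rewrite -bal_sum1 //.
  pose cl : V0 := \col_j (A j l : R^c).
  have -> : \sum_i ((A i l : R) : R^c) *: ee i = \sum_i ((cl i ord0 : R) : R^c) *: ee i.
    by apply: eq_bigr => i _; rewrite mxE.
  rewrite eE; have -> : lqpi K0_sub K0_Z cl = 0.
    apply/lqpi0; exists (fun l' => (l' == l)%:R) => j.
    rewrite mxE (bigD1 l) //= eqxx mulr1 big1 ?addr0 // => l' /negPf ->.
    by rewrite mulr0.
  by have := bal_B1 hb 0 0 (w l); rewrite !subrr.
exists (qindA KN_sub u0K); split.
  move=> x y; case: (lqpi_surj x) => c ->; rewrite b1E /b0 qindAE mk_addE /u0.
  under eq_bigr do rewrite -hb3.
  by rewrite -bal_sum1 // eE.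
move=> v hv t; case: (qpi_surj t) => v0 ->.
have E : qpi KN_sub v0 = \sum_j b1 (ee j) (v0 j).
  rewrite /ee; under eq_bigr do rewrite b1E /b0.
  rewrite -qpi_sum; congr qpi; apply: dext => i.
  rewrite dprod_sumE (bigD1 i) //= mxE eqxx /= scale1r big1 ?addr0 // => j /negPf hj.
  by rewrite mxE eq_sym hj scale0r.
rewrite {1}E raddf_sum qindAE mk_addE /u0; apply: eq_bigr => j _; exact: hv.
Qed.
End TN.

Lemma pure_sys (N M : lmodType R) (f : {linear N -> M}) : pure_map f ->
  forall (z : 'I_a -> N) (w : 'I_b -> M),
  (forall j, f (z j) = \sum_l A j l *: w l) ->
  exists w' : 'I_b -> N, forall j, z j = \sum_l A j l *: w' l.
Proof.
move=> Hp z w Hz.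
pose fm (v : DN N) : TT M := qpi (KN_sub M) (fun j => f (v j)).
have fm_add : zmod_morphism fm.
  move=> v1 v2; rewrite /fm qpiB; congr qpi; apply: dext => j.
  by rewrite !dprod_addE !dprod_oppE linearB.
have fmK : forall v, KN v -> mk_add fm_add v = 0.
  move=> v [w0 hw]; rewrite mk_addE; apply/qpi0; exists (fun l => f (w0 l)) => j.
  by rewrite hw lin_sumZ.
pose u := qindA (KN_sub N) fmK.
have Hu : forall (x : FF) (y : N), u (b1 x y) = b1 x (f y).
  move=> x y; case: (FF_surj x) => c ->; rewrite !b1E /b0 qindAE mk_addE /fm.
  by congr qpi; apply: dext => j; rewrite linearZ_LR.
have uinj := Hp (FF) _ _ _ _ (b1_tensor N) (b1_tensor M) u Hu.
have : u (qpi (KN_sub N) z) = 0.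
  rewrite qindAE mk_addE; apply/qpi0; exists w => j; exact: Hz.
rewrite -(raddf0 u) => /uinj /qpi0 [w' hw']; by exists w'.
Qed.
End Pure.

Lemma pure_flat (R : pzRingType) (n : nat) (hn : (1 < n)%N) (N M C : lmodType R)
  (f : {linear N -> M}) (g : {linear M -> C}) :
  short_exact f g -> pure_map f -> FPn_flat n M -> FPn_flat n N /\ FPn_flat n C.
Proof.
move=> [finj gsurj gker] Hp FM; split.
  move=> k d Hres x Hx.
  have Hfx : forall j, \sum_(l < k 1%N) d 0%N j l *: f (x l) = 0.
    by move=> j; rewrite -lin_sumZ Hx linear0.
  have [y Hy] := FM k d Hres _ Hfx.
  exact: (pure_sys Hp Hy).
move=> k d Hres x Hx.
have [Hdd _] := Hres 0%N hn.
have [x' Hx'] := choice (fun l => gsurj (x l)).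
pose t j := \sum_(l < k 1%N) d 0%N j l *: x' l.
have gt j : g (t j) = 0.
  by rewrite lin_sumZ -[RHS](Hx j); apply: eq_bigr => l _; rewrite Hx'.
have [zz Hzz] := choice (fun j => (proj1 (gker (t j))) (gt j)).
have [w' Hw'] := pure_sys Hp (w := x') Hzz.
pose x2 l := x' l - f (w' l).
have Hx2 : forall j, \sum_(l < k 1%N) d 0%N j l *: x2 l = 0.
  move=> j; rewrite /x2; under eq_bigr do rewrite scalerBr.
  by rewrite sumrB -lin_sumZ -Hw' Hzz subrr.
have [y Hy] := FM k d Hres _ Hx2.
exists (fun m => g (y m)) => l.
have gf : forall a, g (f a) = 0 by move=> a0; apply/(proj2 (gker _)); exists a0.
by rewrite -Hx' -[x' l](subrK (f (w' l))) -/(x2 l) linearD gf addr0 Hy lin_sumZ.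
Qed.

Unset Implicit Arguments.
Theorem proposition3p11 (R : pzRingType) (n : nat) (hn : (1 < n)%N) :
  (* closed under extensions *)
  (forall (A B C : lmodType R) (f : {linear A -> B}) (g : {linear B -> C}),
     short_exact f g -> FPn_flat n A -> FPn_flat n C -> FPn_flat n B) /\
  (* closed under direct limits *)
  (forall (I : Type) (le : I -> I -> Prop) (Mi : I -> lmodType R)
          (f : forall i j, {linear Mi i -> Mi j}) (M : lmodType R)
          (g : forall i, {linear Mi i -> M}),
     direct_system le f -> is_direct_limit le f g ->
     (forall i, FPn_flat n (Mi i)) -> FPn_flat n M) /\
  (* closed under direct products *)
  (forall (I : Type) (Mi : I -> lmodType R) (P : lmodType R)
          (p : forall i, {linear P -> Mi i}),
     is_product p -> (forall i, FPn_flat n (Mi i)) -> FPn_flat n P) /\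
  (* closed under pure submodules and pure quotients *)
  (forall (N M C : lmodType R) (f : {linear N -> M}) (g : {linear M -> C}),
     short_exact f g -> pure_map f -> FPn_flat n M ->
     FPn_flat n N /\ FPn_flat n C).
Proof.
split; first by move=> A B C f g; exact: ext_flat.
split; first by move=> I le Mi f M g Hds Hdl; exact: (dl_flat Hds Hdl).
split; first by move=> I Mi P p; exact: prod_flat.
by move=> N M C f g; exact: pure_flat.
Qed.
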